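(* Fix $\theta\ge1$. Let $A$ be a finitely generated free abelian group, let $S$ be a symmetric finite generating set for $A$, and let $T$ be a finite subset of $A$ such that the subgroup $\langle T\rangle$ has finite index in $A$. For $N\in\mathbb{N}$ let $T_N=\{t^{\pm N}\mid t\in T\}$. Then for all sufficiently large $N$, only finitely many words in the letters $S$ are $\theta$-efficient for the word metric on $A$ associated to the generating set $S\cup T_N$.
   Context: Given a group with a symmetric finite generating set $Y$ and associated word metric $d$, a word $w=a_1\cdots a_l$ in letters from a subset of $Y$ is $\theta$-efficient if $l\le\theta\, d(1,w)$, where $d(1,w)$ is the word length (with respect to $Y$) of the element represented by $w$. *)

(* Defs.v *)
From HB Require Import structures.
From mathcomp Require Import all_boot all_order all_algebra.
From mathcomp Require Import boolp reals.
Set Implicit Arguments. Unset Strict Implicit. Unset Printing Implicit Defensive.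
Import Order.TTheory GRing.Theory Num.Theory.
Local Open Scope ring_scope.

(* The finitely generated free abelian group of rank n, written additively:
   Z^n = 'rV[int]_n.  Group multiplication is +, t^k is t *~ k. *)
Definition fgfree (n : nat) := 'rV[int]_n.

Section Words.
Variable A : zmodType.

Definition word_over (Y : seq A) (w : seq A) : bool := all (fun a => a \in Y) w.

Definition word_eval (w : seq A) : A := \sum_(a <- w) a.

Definition symmetric_set (Y : seq A) : Prop := forall y, y \in Y -> - y \in Y.

(* Y generates A (as a group; Y is used symmetrically by the caller) *)
Definition generates (Y : seq A) : Prop :=
  forall g : A, exists w, word_over Y w /\ word_eval w = g.

Definition in_gen_subgroup (T : seq A) (g : A) : Prop :=
  exists w, word_over (T ++ map (fun t => - t) T) w /\ word_eval w = g.

(* <T> has finite index: finitely many cosets, i.e. a finite list of coset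
   representatives covering A *)
Definition finite_index_gen (T : seq A) : Prop :=
  exists R : seq A, forall g : A,
    exists2 r, r \in R & in_gen_subgroup T (g - r).

Definition reach_in (Y : seq A) (g : A) (k : nat) : Prop :=
  exists w, word_over Y w /\ size w = k /\ word_eval w = g.

(* word length d(1,g) w.r.t. Y: least length of a word over Y representing g
   (0 if none exists; never happens when Y generates) *)
Definition word_length (Y : seq A) (g : A) : nat :=
  match pselect (exists k, reach_in Y g k) with
  | left P => @ex_minn (fun k => `[< reach_in Y g k >])
                (let: ex_intro k Hk := P in ex_intro _ k (asboolT Hk))
  | right _ => 0%N
  end.

Definition efficient (R : realType) (theta : R) (Y : seq A) (w : seq A) : Prop :=
  (size w)%:R <= theta * (word_length Y (word_eval w))%:R.

Definition powers_pm (T : seq A) (N : nat) : seq A :=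
  map (fun t => t *+ N) T ++ map (fun t => - (t *+ N)) T.

End Words.

(* Main.v *)
Require Import Defs.
From HB Require Import structures.
From mathcomp Require Import all_boot all_order all_algebra.
From mathcomp Require Import boolp reals.
From mathcomp Require Import zify lra.
Import Order.TTheory GRing.Theory Num.Theory.
Local Open Scope ring_scope.

Set Implicit Arguments. Unset Strict Implicit.

Section H.
Variable A : zmodType.
Implicit Types (Y X T : seq A) (g h : A).

Definition reach_le Y g k := exists k', (k' <= k)%N /\ reach_in Y g k'.

Lemma reach_in_add Y g h k1 k2 : reach_in Y g k1 -> reach_in Y h k2 ->
  reach_in Y (g + h) (k1 + k2).
Proof.
move=> [u [Hu [Su Eu]]] [v [Hv [Sv Ev]]]; exists (u ++ v); split.
  by rewrite /word_over all_cat -!/(word_over _ _) Hu Hv.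
by rewrite size_cat Su Sv /word_eval big_cat /= -/(word_eval u) -/(word_eval v) Eu Ev.
Qed.

Lemma reach_le_add Y g h k1 k2 : reach_le Y g k1 -> reach_le Y h k2 ->
  reach_le Y (g + h) (k1 + k2).
Proof.
move=> [a [Ha Ra]] [b [Hb Rb]]; exists (a + b)%N; split; first exact: leq_add.
exact: reach_in_add.
Qed.

Lemma reach_le_mono Y g k1 k2 : (k1 <= k2)%N -> reach_le Y g k1 -> reach_le Y g k2.
Proof. by move=> H [a [Ha Ra]]; exists a; split => //; apply: leq_trans H. Qed.

Lemma reach_le0 Y : reach_le Y 0 0.
Proof. by exists 0%N; split => //; exists [::]; rewrite /word_eval big_nil. Qed.

Lemma reach_le_mul Y g k c : reach_le Y g k -> reach_le Y (g *+ c) (k * c).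
Proof.
move=> H; elim: c => [|c IH]; first by rewrite mulr0n muln0; exact: reach_le0.
by rewrite mulrS mulnS; apply: reach_le_add.
Qed.

Lemma word_length_le Y g k : reach_le Y g k -> (word_length Y g <= k)%N.
Proof.
move=> [k' [Hk R']]; rewrite /word_length; case: pselect => [P|N]; last first.
  by exfalso; apply: N; exists k'.
case: ex_minnP => m _ Hmin; apply: leq_trans Hk; apply: Hmin.
exact/asboolP.
Qed.

Lemma word_over_nil (v : seq A) : word_over (@nil A) v -> v = [::].
Proof. by case: v. Qed.

Lemma eval_split (x : A) v : word_eval v =
  x *+ count (pred1 x) v + word_eval (filter (predC1 x) v).
Proof.
rewrite /word_eval (bigID (pred1 x)) /= big_filter; congr (_ + _).
rewrite (eq_bigr (fun=> x)); last by move=> i /eqP.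
rewrite big_const_seq; elim: (count _ _) => [|c IH] //=.
by rewrite IH mulrS.
Qed.

Lemma group_bound Y X N K a b : (0 < N)%N ->
 (forall x, x \in X -> exists k, (0 < k <= K)%N /\ reach_le Y (x *+ (k * N)) a) ->
 (forall x, x \in X -> reach_le Y x b) ->
 forall v, word_over X v ->
   reach_le Y (word_eval v) (size X * (K * N * b) + a * (size v %/ N)).
Proof.
move=> N0; elim: X => [|x X IH] HA HB v Hv.
  rewrite (word_over_nil Hv) /word_eval big_nil.
  by apply: reach_le_mono (reach_le0 Y).
rewrite (eval_split x v).
set c := count (pred1 x) v; set v' := filter (predC1 x) v.
have Hv' : word_over X v'.
  apply/allP => y; rewrite mem_filter => /andP [ne yv].
  by have := allP Hv y yv; rewrite inE (negbTE ne).
have IH' := IH (fun y hy => HA y ltac:(by rewrite in_cons hy orbT)) (fun y hy => HB y ltac:(by rewrite in_cons hy orbT)) v' Hv'.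
have [k [/andP [k0 kK] Ra]] := HA x (mem_head _ _).
have Rb := HB x (mem_head _ _).
have kN0 : (0 < k * N)%N by rewrite muln_gt0 k0.
have Ex : x *+ c = (x *+ (k * N)) *+ (c %/ (k * N)) + x *+ (c %% (k * N)).
  by rewrite -mulrnA -mulrnDr mulnC -divn_eq.
rewrite Ex.
have := reach_le_add (reach_le_add (reach_le_mul (c %/ (k * N)) Ra) (reach_le_mul (c %% (k * N)) Rb)) IH'.
apply: reach_le_mono.
have h1 : (b * (c %% (k * N)) <= K * N * b)%N.
  rewrite mulnC leq_mul2r; apply/orP; right.
  apply: leq_trans (ltnW (ltn_pmod _ kN0)) _.
  by rewrite leq_mul2r kK orbT.
have h2 : (c %/ (k * N) <= c %/ N)%N by apply: leq_div2l => //; rewrite leq_pmull.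
have h3 : (c %/ N + size v' %/ N <= size v %/ N)%N.
  have -> : size v = (c + size v')%N by rewrite size_filter /c count_predC.
  by rewrite divnD // leq_addr.
have h4 : (a * (c %/ (k * N)) <= a * (c %/ N))%N by rewrite leq_mul2l h2 orbT.
have h5 : (a * (c %/ N) + a * (size v' %/ N) <= a * (size v %/ N))%N.
  by rewrite -mulnDr leq_mul2l h3 orbT.
rewrite /=.
set P := (a * (c %/ (k * N)))%N in h4 *.
set Q := (b * (c %% (k * N)))%N in h1 *.
set U := (a * (c %/ N))%N in h4 h5.
set W := (a * (size v' %/ N))%N in h5 *.
set Z := (a * (size v %/ N))%N in h5 *.
set KN := (K * N * b)%N in h1 *.
rewrite mulSn. lia.
Qed.

Lemma in_gen_add T g h : in_gen_subgroup T g -> in_gen_subgroup T h ->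
  in_gen_subgroup T (g + h).
Proof.
move=> [u [Hu Eu]] [v [Hv Ev]]; exists (u ++ v); split.
  by rewrite /word_over all_cat -!/(word_over _ _) Hu Hv.
by rewrite /word_eval big_cat /= -/(word_eval u) -/(word_eval v) Eu Ev.
Qed.

Lemma in_gen_opp T g : in_gen_subgroup T g -> in_gen_subgroup T (- g).
Proof.
move=> [u [Hu Eu]]; exists (map (fun x => - x) u); split.
  apply/allP => y /mapP [z zu ->]; have := allP Hu z zu.
  rewrite !mem_cat => /orP [zT|/mapP [t tT ->]].
    by rewrite (map_f (fun x => - x) zT) orbT.
  by rewrite opprK tT.
by rewrite /word_eval big_map sumrN -/(word_eval u) Eu.
Qed.

Lemma in_gen_reach T Sg N v : word_over (T ++ map (fun t => - t) T) v ->
  reach_in (Sg ++ powers_pm T N) (word_eval v *+ N) (size v).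
Proof.
move=> Hv; exists (map (fun x => x *+ N) v); split; last split.
- apply/allP => y /mapP [z zu ->]; have := allP Hv z zu.
  rewrite !mem_cat => /orP [zT|/mapP [t tT ->]].
    by rewrite (map_f (fun x => x *+ N) zT) orbT.
  by rewrite mulNrn (map_f (fun x => - (x *+ N)) tT) !orbT.
- by rewrite size_map.
- by rewrite /word_eval big_map sumrMnl.
Qed.

Lemma pigeon T (Rs : seq A) s :
  (forall g, exists2 r, r \in Rs & in_gen_subgroup T (g - r)) ->
  exists k, (0 < k <= size Rs)%N /\ in_gen_subgroup T (s *+ k).
Proof.
move=> HR.
have : forall i : nat, exists r, r \in Rs /\ in_gen_subgroup T (s *+ i - r).
  by move=> i; have [r ? ?] := HR (s *+ i); exists r.
case/choice => rho Hrho.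
set L := map rho (iota 0 (size Rs).+1).
have : ~~ uniq L.
  apply/negP => U.
  have : (size L <= size Rs)%N.
    by apply: (uniq_leq_size U) => y /mapP [i _ ->]; case: (Hrho i).
  by rewrite size_map size_iota ltnn.
case/(uniqPn 0) => i [j [ij]]; rewrite size_map size_iota => jS.
have iS : (i < (size Rs).+1)%N by apply: ltn_trans jS.
rewrite !(nth_map 0%N) ?size_iota // !nth_iota // !add0n => Eij.
exists (j - i)%N; split.
  by rewrite subn_gt0 ij /= leq_subLR; apply: leq_trans (leq_addl _ _); rewrite -ltnS.
have [_ Hi] := Hrho i; have [_ Hj] := Hrho j.
have := in_gen_add Hj (in_gen_opp Hi).
rewrite Eij.
suff -> : s *+ (j - i) = s *+ j - rho j - (s *+ i - rho j) by [].
by rewrite (mulrnBr _ (ltnW ij)) opprB addrA subrK.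
Qed.

Fixpoint words_len (Sg : seq A) (m : nat) : seq (seq A) :=
  if m is m'.+1 then [seq x :: u | x <- Sg, u <- words_len Sg m'] else [:: [::]].

Fixpoint words_upto (Sg : seq A) (L : nat) : seq (seq A) :=
  if L is L'.+1 then words_len Sg L ++ words_upto Sg L' else words_len Sg 0.

Lemma words_len_mem Sg w : word_over Sg w -> w \in words_len Sg (size w).
Proof.
elim: w => [|x w IH] //= /andP [xS Hw].
by apply: (allpairs_f (fun x u => x :: u)) => //; apply: IH.
Qed.

Lemma words_upto_mem Sg w L : word_over Sg w -> (size w <= L)%N -> w \in words_upto Sg L.
Proof.
move=> Hw; elim: L => [|L IH].
  by rewrite leqn0 => /eqP E; have := words_len_mem Hw; rewrite E.
rewrite leq_eqVlt => /orP [/eqP E|H]; rewrite [words_upto _ _]/= mem_cat.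
  by have := words_len_mem Hw; rewrite E => ->.
by rewrite IH ?orbT.
Qed.

Lemma bound_list (X : seq A) (P : A -> nat -> Prop) :
  (forall x m1 m2, (m1 <= m2)%N -> P x m1 -> P x m2) ->
  (forall x, x \in X -> exists m, P x m) -> exists m, forall x, x \in X -> P x m.
Proof.
move=> Pm; elim: X => [|x X IH] H; first by exists 0%N.
have [m1 H1] := H x (mem_head _ _).
have [m2 H2] := IH (fun y hy => H y ltac:(by rewrite in_cons hy orbT)).
exists (maxn m1 m2) => y; rewrite in_cons => /orP [/eqP ->|hy].
  by apply: Pm H1; apply: leq_maxl.
by apply: Pm (H2 y hy); apply: leq_maxr.
Qed.
End H.

Unset Implicit Arguments.

Theorem lemma5p1 (R : realType) (theta : R) (n : nat) (S T : seq (fgfree n)) :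
  1 <= theta ->
  symmetric_set S -> generates S ->
  finite_index_gen T ->
  exists N0 : nat, forall N : nat, (N0 <= N)%N ->
    exists ws : seq (seq (fgfree n)), forall w : seq (fgfree n),
      word_over S w -> efficient theta (S ++ powers_pm T N) w -> w \in ws.
Proof.
move=> th1 _ _ [Rs HR].
set K := size Rs.
have [a Ha] : exists a, forall s, s \in S -> exists k, (0 < k <= K)%N /\
    exists v, word_over (T ++ map (fun t => - t) T) v /\ word_eval v = s *+ k
      /\ (size v <= a)%N.
  apply: bound_list.
    move=> x m1 m2 le [k [Hk [v [Hv [Ev Sv]]]]]; exists k; split => //.
    by exists v; split => //; split => //; apply: leq_trans le.
  move=> s _; have [k [Hk [v [Hv Ev]]]] := pigeon s HR.
  by exists (size v), k; split => //; exists v.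
have th0 : 0 <= theta by apply: le_trans th1.
set N0 := (Num.bound (2 * theta * a%:R)).+1.
exists N0 => N HN.
have HNr : 2 * theta * a%:R <= N%:R.
  have := archi_boundP (x := 2 * theta * a%:R).
  have p : 0 <= 2 * theta * a%:R by rewrite !mulr_ge0.
  move=> /(_ p) /ltW H; apply: le_trans H _; rewrite ler_nat.
  by apply: leq_trans HN; rewrite /N0.
have N0p : (0 < N)%N by apply: leq_trans HN.
set Y := S ++ powers_pm T N.
set C := (size S * (K * N * 1))%N.
set L := Num.bound (2 * theta * C%:R).
exists (words_upto S L) => w Hw Heff.
apply: words_upto_mem => //.
have HA : forall x, x \in S -> exists k, (0 < k <= K)%N /\ reach_le Y (x *+ (k * N)) a.
  move=> x hx; have [k [Hk [v [Hv [Ev Sv]]]]] := Ha x hx.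
  exists k; split => //; exists (size v); split => //.
  by rewrite mulrnA -Ev; apply: in_gen_reach.
have HB : forall x, x \in S -> reach_le Y x 1.
  move=> x hx; exists 1%N; split => //; exists [:: x]; split; last split => //.
    by rewrite /word_over /= mem_cat hx.
  by rewrite /word_eval big_seq1.
have Rw := group_bound N0p HA HB Hw.
have Hd := word_length_le Rw.
move: Heff; rewrite /efficient.
set d := word_length _ _ => Heff.
set l := size w in Hd Heff *.
set q := (l %/ N)%N in Hd.
have Hq : (q * N <= l)%N by apply: leq_trunc_div.
have Hdr : d%:R <= C%:R + a%:R * q%:R :> R.
  by rewrite -natrM -natrD ler_nat.
have Hqr : q%:R * N%:R <= l%:R :> R by rewrite -natrM ler_nat.
have Hlr : l%:R <= 2 * theta * C%:R.
  have : 0 <= l%:R :> R by [].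
  have : 0 <= d%:R :> R by [].
  have : 0 <= C%:R :> R by [].
  have : 0 <= a%:R :> R by [].
  have : 0 <= q%:R :> R by [].
  have : 0 < N%:R :> R by rewrite ltr0n.
  move=> *; nra.
have Cp : 0 <= 2 * theta * C%:R by rewrite !mulr_ge0.
have := le_lt_trans Hlr (archi_boundP Cp).
by rewrite ltr_nat => /ltnW.
Qed.
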